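(* Let $q'>0$, $e'\in(0,1)$, $q_{\max}>0$, and let $\mathcal D_1=\{(e,\omega'):0\le e\le1,\ 0\le\omega'\le\pi\}$, $\mathcal D_2=\{(q,\omega):0<q\le q_{\max},\ 0\le\omega\le\pi/2\}$. For each $(q,\omega)\in\mathcal D_2$, $$\min_{(e,\omega')\in\mathcal D_1}\delta_{\rm nod}=\max\{0,\ \ell^\omega_{\rm int},\ \ell^\omega_{\rm ext}\},\qquad \max_{(e,\omega')\in\mathcal D_1}\delta_{\rm nod}=\max\{u^\omega_{\rm int},\ u^\omega_{\rm ext},\ u^\omega_{\rm link}\},$$ where $\ell^\omega_{\rm int}(q,\omega)=q'-\frac{2q}{1-\cos\omega}$ (equal to $-\infty$ at $\omega=0$), $\ell^\omega_{\rm ext}(q,\omega)=q-Q'$, $u^\omega_{\rm int}(q,\omega)=p'-q$, $$u^\omega_{\rm ext}(q,\omega)=\min\Big\{\frac{2q}{1-\cos\omega}-\frac{p'}{1-\hat\xi'_*},\ \frac{2q}{1+\cos\omega}-q'\Big\},\quad \hat\xi'_*=\min\{\xi'_*,e'\},\quad \xi'_*=\frac{4q\cos\omega}{p'\sin^2\omega+\sqrt{p'^2\sin^4\omega+16q^2\cos^2\omega}},$$ $$u^\omega_{\rm link}(q,\omega)=\min\Big\{Q'-\frac{q(1+\hat e_* )}{1+\hat e_*\cos\omega},\ \frac{2q}{1-\cos\omega}-q'\Big\},\quad \hat e_*=\max\{0,\min\{e_*,1\}\},$$ $$e_*(q,\omega)=\frac{2\big(p'-q(1-e'^2)\big)}{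q(1-e'^2)+\sqrt{q^2(1-e'^2)^2+4p'\cos^2\omega\,\big(p'-q(1-e'^2)\big)}}.$$
   Context: For $q>0$, $e\in[0,1]$ and angles $\omega,\omega'$, define $r_{\pm}=\frac{q(1+e)}{1\pm e\cos\omega}$, $r'_{\pm}=\frac{q'(1+e')}{1\pm e'\cos\omega'}$ (extended-real value $+\infty$ allowed when a denominator vanishes; all functions may take values $\pm\infty$ as limits), $d^+=r'_+-r_+$, $d^-=r'_--r_-$, and the nodal distance $\delta_{\rm nod}(q,e,\omega,\omega')=\min\{|d^+|,|d^-|\}$. Also $p'=q'(1+e')$, $Q'=\frac{q'(1+e')}{1-e'}$. *)

(* Defs.v *)
From Stdlib Require Import Reals Lra.
Open Scope R_scope.

Inductive ER : Type := Fin (x : R) | PInf | MInf.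

(* Subtraction; the undefined forms ∞-∞ never arise in the statement below
   (they would need e' = 1); conventionally set to 0. *)
Definition er_sub (x y : ER) : ER :=
  match x, y with
  | Fin a, Fin b => Fin (a - b)
  | PInf, Fin _ | PInf, MInf | Fin _, MInf => PInf
  | MInf, Fin _ | MInf, PInf | Fin _, PInf => MInf
  | PInf, PInf | MInf, MInf => Fin 0
  end.

Definition er_abs (x : ER) : ER :=
  match x with Fin a => Fin (Rabs a) | _ => PInf end.

Definition er_le (x y : ER) : Prop :=
  match x, y with
  | Fin a, Fin b => a <= b
  | MInf, _ => True
  | _, PInf => True
  | _, _ => False
  end.

Definition er_min (x y : ER) : ER :=
  match x, y with
  | Fin a, Fin b => Fin (Rmin a b)
  | MInf, _ | _, MInf => MInf
  | PInf, z | z, PInf => z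
  end.

Definition er_max (x y : ER) : ER :=
  match x, y with
  | Fin a, Fin b => Fin (Rmax a b)
  | PInf, _ | _, PInf => PInf
  | MInf, z | z, MInf => z
  end.

Definition er_divpos (a b : R) : ER :=
  if Req_EM_T b 0 then PInf else Fin (a / b).

Definition r_plus (q e w : R) : ER := er_divpos (q * (1 + e)) (1 + e * cos w).
Definition r_minus (q e w : R) : ER := er_divpos (q * (1 + e)) (1 - e * cos w).

(* nodal distance; (q', e') are the fixed parameters of the second orbit *)
Definition delta_nod (q' e' q e w w' : R) : ER :=
  er_min (er_abs (er_sub (r_plus q' e' w') (r_plus q e w)))
         (er_abs (er_sub (r_minus q' e' w') (r_minus q e w))).

Definition p_ (q' e' : R) : R := q' * (1 + e').
Definition Q_ (q' e' : R) : R := q' * (1 + e') / (1 - e').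

Definition l_int (q' e' q w : R) : ER :=
  er_sub (Fin q') (er_divpos (2 * q) (1 - cos w)).
Definition l_ext (q' e' q w : R) : ER := Fin (q - Q_ q' e').
Definition u_int (q' e' q w : R) : ER := Fin (p_ q' e' - q).

Definition xi_star (q' e' q w : R) : R :=
  4 * q * cos w /
  (p_ q' e' * (sin w) ^ 2
   + sqrt ((p_ q' e') ^ 2 * (sin w) ^ 4 + 16 * q ^ 2 * (cos w) ^ 2)).
Definition xi_hat (q' e' q w : R) : R := Rmin (xi_star q' e' q w) e'.

Definition u_ext (q' e' q w : R) : ER :=
  er_min (er_sub (er_divpos (2 * q) (1 - cos w))
                 (Fin (p_ q' e' / (1 - xi_hat q' e' q w))))
         (er_sub (er_divpos (2 * q) (1 + cos w)) (Fin q')).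

Definition e_star (q' e' q w : R) : R :=
  2 * (p_ q' e' - q * (1 - e' ^ 2)) /
  (q * (1 - e' ^ 2)
   + sqrt ((q ^ 2) * (1 - e' ^ 2) ^ 2
           + 4 * p_ q' e' * (cos w) ^ 2 * (p_ q' e' - q * (1 - e' ^ 2)))).
Definition e_hat (q' e' q w : R) : R := Rmax 0 (Rmin (e_star q' e' q w) 1).

Definition u_link (q' e' q w : R) : ER :=
  er_min (Fin (Q_ q' e' - q * (1 + e_hat q' e' q w) / (1 + e_hat q' e' q w * cos w)))
         (er_sub (er_divpos (2 * q) (1 - cos w)) (Fin q')).

(* Main.v *)
Require Import Defs.
From Stdlib Require Import Reals Lra Psatz.
Open Scope R_scope.

Ltac pos := repeat (apply Rmult_le_pos); lra.

Lemma frac_le x1 y1 x2 y2 : 0 < y1 -> 0 < y2 -> x1 * y2 <= x2 * y1 -> x1 / y1 <= x2 / y2.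
Proof.
  intros h1 h2 h.
  assert (E : x2 / y2 - x1 / y1 = (x2 * y1 - x1 * y2) / (y1 * y2)) by (field; lra).
  assert (0 <= (x2 * y1 - x1 * y2) / (y1 * y2)).
  { apply Rmult_le_pos; [lra|]. left; apply Rinv_0_lt_compat; nra. }
  lra.
Qed.

Lemma le_frac x y z : 0 < y -> x * y <= z -> x <= z / y.
Proof. intros; apply Rle_trans with (x/1); [apply Req_le; field|]. apply frac_le; lra. Qed.
Lemma frac_le' x y z : 0 < y -> x <= z * y -> x / y <= z.
Proof. intros; apply Rle_trans with (z/1); [|apply Req_le; field]. apply frac_le; lra. Qed.

Definition aa q c e := q * (1 + e) / (1 + e * c).
Definition bb q c e := q * (1 + e) / (1 - e * c).

Lemma aa_bounds q c e : 0 < q -> 0 <= c <= 1 -> 0 <= e <= 1 ->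
  q <= aa q c e /\ aa q c e <= 2 * q / (1 + c).
Proof.
  intros hq hc he; unfold aa; split.
  - apply le_frac; [nra|]. assert (0 <= q*(e*(1-c))) by pos. nra.
  - apply frac_le; [nra|lra|]. assert (0 <= q*((1-e)*(1-c))) by pos. nra.
Qed.

Lemma bb_bounds q c e : 0 < q -> 0 <= c <= 1 -> 0 <= e <= 1 -> e * c < 1 ->
  q <= bb q c e /\ aa q c e <= bb q c e.
Proof.
  intros hq hc he hec; unfold aa, bb; split.
  - apply le_frac; [nra|]. assert (0 <= q*(e*(1+c))) by pos. nra.
  - apply frac_le; [nra|nra|]. assert (0 <= q*(1+e)*(e*c)) by pos. nra.
Qed.

Lemma bb_le_b1 q c e : 0 < q -> 0 <= c < 1 -> 0 <= e <= 1 ->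
  bb q c e <= 2 * q / (1 - c).
Proof. intros; unfold bb; apply frac_le; [nra|lra|]. assert (0 <= q*((1-e)*(1+c))) by pos. nra. Qed.

Lemma aa_mono q c e1 e2 : 0 < q -> 0 <= c <= 1 -> 0 <= e1 -> e1 <= e2 -> e2 <= 1 ->
  aa q c e1 <= aa q c e2.
Proof. intros; unfold aa; apply frac_le; [nra|nra|]. assert (0 <= q*((e2-e1)*(1-c))) by pos. nra. Qed.

Lemma bb_mono q c e1 e2 : 0 < q -> 0 <= c <= 1 -> 0 <= e1 -> e1 <= e2 -> e2 * c < 1 ->
  bb q c e1 <= bb q c e2.
Proof. intros; unfold bb; apply frac_le; [nra|nra|]. assert (0 <= q*((e2-e1)*(1+c))) by pos. nra. Qed.

Lemma AB_bounds p e' y : 0 < p -> 0 < e' < 1 -> -1 <= y <= 1 ->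
  p / (1 + e') <= p / (1 + e' * y) <= p / (1 - e') /\
  p / (1 + e') <= p / (1 - e' * y) <= p / (1 - e') /\
  (p / (1 + e' * y) <= p \/ p / (1 - e' * y) <= p).
Proof.
  intros hp he hy.
  assert (0 <= p*(e'*(1-y))) by pos.
  assert (0 <= p*(e'*(1+y))) by pos.
  split; [split|split; [split|]]; try (apply frac_le; nra).
  destruct (Rle_dec 0 y).
  - left. apply frac_le'; [nra|]. assert (0 <= p*(e'*y)) by pos. nra.
  - right. apply frac_le'; [nra|]. assert (0 <= p*(e'*(-y))) by pos. nra.
Qed.

Lemma sum_ab q c e p e' : 0 <= c <= 1 -> 0 <= e <= 1 -> e * c < 1 -> 0 < e' < 1 ->
  aa q c e + bb q c e - (p / (1 - e') + p / (1 + e')) =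
  2 * (p * c^2 * e^2 + q * (1 - e'^2) * e + q * (1 - e'^2) - p) /
     ((1 - e^2 * c^2) * (1 - e'^2)).
Proof.
  intros; assert (0 <= e*c) by pos; unfold aa, bb. field. repeat split; intro; nra.
Qed.

Lemma xi_ident q c p xi : 0 <= c < 1 -> 0 <= xi < 1 ->
  (2*q/(1+c) - p/(1+xi)) - (2*q/(1-c) - p/(1-xi)) =
  2 * (2*q*c*xi^2 + p*(1-c^2)*xi - 2*q*c) / ((1 - xi^2) * (1 - c^2)).
Proof. intros; field. repeat split; intro; nra. Qed.

Definition xs p q c := 4*q*c/(p*(1-c^2) + sqrt(p^2*(1-c^2)^2 + 16*q^2*c^2)).

Lemma xs_facts p q c : 0 < p -> 0 < q -> 0 <= c <= 1 ->
  0 <= xs p q c /\ 2*q*c*(xs p q c)^2 + p*(1-c^2)*(xs p q c) - 2*q*c = 0.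
Proof.
  intros hp hq hc. unfold xs.
  set (P := p*(1-c^2)). set (u := 4*q*c).
  assert (HP : 0 <= P) by (unfold P; assert (0 <= 1 - c^2) by nra; pos).
  assert (Hu : 0 <= u) by (unfold u; pos).
  replace (16*q^2*c^2) with (u^2) by (unfold u; ring).
  replace (p^2*(1-c^2)^2) with (P^2) by (unfold P; ring).
  set (S := sqrt (P^2 + u^2)).
  assert (HS2 : S * S = P^2 + u^2) by (apply sqrt_sqrt; nra).
  assert (HS0 : 0 <= S) by apply sqrt_pos.
  assert (HSu : u <= S) by nra.
  assert (Hd : 0 < P + S).
  { destruct (Rle_dec c 0).
    - assert (c = 0) by lra. unfold P. subst c. assert (0 <= S) by auto. nra.
    - assert (0 < u) by (unfold u; nra). lra. }
  set (d := P + S). assert (Hd' : 0 < d) by (unfold d; lra). set (X := u / d).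
  assert (HXd : X * d = u) by (unfold X; field; unfold d; intro; lra).
  split.
  - unfold X. apply Rmult_le_pos; [lra|]. left; apply Rinv_0_lt_compat; lra.
  - assert (Hdd : d * d = 2 * P * d + u^2).
    { unfold d. replace ((P+S)*(P+S)) with (P*P + 2*P*S + S*S) by ring. rewrite HS2. ring. }
    assert (E : (u/2*X^2 + P*X - u/2) * (d*d) = 0).
    { replace ((u/2*X^2 + P*X - u/2) * (d*d)) with (u/2*(X*d)^2 + P*(X*d)*d - u/2*(d*d)) by ring.
      rewrite HXd, Hdd. field. }
    apply Rmult_integral in E. destruct E as [E|E]; [|nra].
    replace (2*q*c) with (u/2) by (unfold u; field). exact E.
Qed.

Definition es p k c := 2*(p-k)/(k + sqrt(k^2 + 4*p*c^2*(p-k))).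

Lemma es_facts p k c : 0 < p -> 0 < k -> 0 <= c <= 1 ->
  0 < k + sqrt(k^2 + 4*p*c^2*(p-k)) /\
  p*c^2*(es p k c)^2 + k*(es p k c) + k - p = 0.
Proof.
  intros hp hk hc. unfold es.
  set (D := p - k).
  set (T := sqrt (k^2 + 4*p*c^2*D)).
  assert (Hr : 0 <= k^2 + 4*p*c^2*D).
  { replace (k^2 + 4*p*c^2*D) with ((k - 2*p*c^2)^2 + 4*p^2*c^2*(1-c^2)) by (unfold D; ring).
    assert (0 <= 1 - c^2) by nra. assert (0 <= 4*p^2*c^2*(1-c^2)) by (assert (0<= p^2*c^2) by nra; nra). pose proof (pow2_ge_0 (k - 2*p*c^2)); lra. }
  assert (HT2 : T * T = k^2 + 4*p*c^2*D) by (apply sqrt_sqrt; auto).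
  assert (HT0 : 0 <= T) by apply sqrt_pos.
  assert (Hd : 0 < k + T) by lra.
  split; [exact Hd|].
  set (d := k + T). assert (Hd' : 0 < d) by (unfold d; lra). set (X := 2*D / d).
  assert (HXd : X * d = 2*D) by (unfold X; field; unfold d; intro; lra).
  assert (Hdd : d * d = 2 * k * d + 4*p*c^2*D).
  { unfold d. replace ((k+T)*(k+T)) with (k*k + 2*k*T + T*T) by ring. rewrite HT2. ring. }
  assert (E : (p*c^2*X^2 + k*X + k - p) * (d*d) = 0).
  { replace ((p*c^2*X^2 + k*X + k - p) * (d*d)) with (p*c^2*(X*d)^2 + k*(X*d)*d - D*(d*d)) by (unfold D; ring).
    rewrite HXd, Hdd. field. }
  apply Rmult_integral in E. destruct E as [E|E]; [exact E|]. unfold d in E. nra.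
Qed.

Lemma comb (A B a b q q' p Q a1 b1 Ax Bx aeh : R) :
 q <= a -> a <= b -> a <= a1 -> b <= b1 -> q' <= A -> A <= Q -> q' <= B -> B <= Q ->
 (A <= p \/ B <= p) -> (Bx <= B \/ Ax <= A) -> a1 - Ax <= b1 - Bx ->
 (Q - a <= Q - aeh \/ b - q' <= Q - aeh) ->
 Rmin (Rabs (A - a)) (Rabs (B - b)) <=
 Rmax (p - q) (Rmax (Rmin (b1 - Bx) (a1 - q')) (Rmin (Q - aeh) (b1 - q'))).
Proof.
  intros h1 h2 h3 h4 h5 h6 h7 h8 h9 h10 h11 h12.
  assert (Mx : forall u v w, u <= v -> u <= Rmax w v) by
    (intros; apply Rle_trans with v; [auto| apply Rmax_r]).
  assert (Ml : forall u v w, u <= w -> u <= Rmax w v) by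
    (intros; apply Rle_trans with w; [auto| apply Rmax_l]).
  assert (Mn : forall u v w, u <= v -> u <= w -> u <= Rmin v w) by
    (intros; unfold Rmin; destruct Rle_dec; auto).
  assert (R1 : Rmin (Rabs (A - a)) (Rabs (B - b)) <= Rabs (A - a)) by apply Rmin_l.
  assert (R2 : Rmin (Rabs (A - a)) (Rabs (B - b)) <= Rabs (B - b)) by apply Rmin_r.
  set (m := Rmin (Rabs (A - a)) (Rabs (B - b))) in *.
  destruct (Rle_dec a A) as [hA|hA]; destruct (Rle_dec b B) as [hB|hB].
  - rewrite Rabs_pos_eq in R1, R2 by lra. apply Ml. destruct h9; lra.
  - rewrite Rabs_pos_eq in R1 by lra. rewrite Rabs_left in R2 by lra.
    apply Mx, Mx. destruct h12; apply Mn; lra.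
  - rewrite Rabs_left in R1 by lra. rewrite Rabs_pos_eq in R2 by lra.
    apply Mx, Mx. destruct h12; apply Mn; lra.
  - rewrite Rabs_left in R1, R2 by lra.
    apply Mx, Ml. destruct h10; apply Mn; lra.
Qed.

Definition dfin p e' q c e y :=
  Rmin (Rabs (p/(1+e'*y) - aa q c e)) (Rabs (p/(1-e'*y) - bb q c e)).

Definition xh p q c e' := Rmin (xs p q c) e'.
Definition eh p q c e' := Rmax 0 (Rmin (es p (q*(1-e'^2)) c) 1).

Lemma xh_bounds p q c e' : 0 < p -> 0 < q -> 0 <= c <= 1 -> 0 < e' < 1 ->
  0 <= xh p q c e' <= e' /\ xh p q c e' <= xs p q c /\
  2*q*c*(xh p q c e')^2 + p*(1-c^2)*(xh p q c e') - 2*q*c <= 0.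
Proof.
  intros hp hq hc he. destruct (xs_facts p q c hp hq hc) as [h0 hm].
  unfold xh. set (X := xs p q c) in *.
  assert (H1 : Rmin X e' <= X) by apply Rmin_l.
  assert (H2 : Rmin X e' <= e') by apply Rmin_r.
  assert (H3 : 0 <= Rmin X e') by (unfold Rmin; destruct Rle_dec; lra).
  set (z := Rmin X e') in *.
  split; [lra|split; [lra|]].
  assert (0 <= 1 - c^2) by nra.
  assert (0 <= (X - z) * (2*q*c*(z + X) + p*(1-c^2))) by (apply Rmult_le_pos; [lra|];
    assert (0 <= 2*q*c*(z+X)) by pos; assert (0 <= p*(1-c^2)) by pos; lra).
  nra.
Qed.

Lemma clamp_cases E : (E <= 0 /\ Rmax 0 (Rmin E 1) = 0) \/ (0 <= E <= 1 /\ Rmax 0 (Rmin E 1) = E)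
  \/ (1 <= E /\ Rmax 0 (Rmin E 1) = 1).
Proof.
  destruct (Rle_dec E 0).
  - left. split; auto. rewrite Rmin_left by lra. apply Rmax_left; lra.
  - destruct (Rle_dec E 1).
    + right; left. split; [lra|]. rewrite Rmin_left by lra. apply Rmax_right; lra.
    + right; right. split; [lra|]. rewrite Rmin_right by lra. apply Rmax_right; lra.
Qed.

Lemma eh_facts p q c e' : 0 < p -> 0 < q -> 0 <= c <= 1 -> 0 < e' < 1 ->
  let k := q*(1-e'^2) in
  0 <= eh p q c e' <= 1 /\
  (0 < eh p q c e' -> p*c^2*(eh p q c e')^2 + k*(eh p q c e') + k - p <= 0) /\
  (eh p q c e' < 1 -> p*c^2*(eh p q c e')^2 + k*(eh p q c e') + k - p >= 0).
Proof.
  intros hp hq hc he k.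
  assert (hk : 0 < k) by (unfold k; assert (0 < 1 - e'^2) by nra; nra).
  destruct (es_facts p k c hp hk hc) as [hd hg].
  unfold eh. fold k. set (E := es p k c) in *.
  assert (hEsign : (0 <= E -> 0 <= p - k) /\ (E < 0 -> p - k < 0)).
  { unfold E, es. split; intro h.
    - destruct (Rle_dec 0 (p-k)); auto. exfalso.
      assert (2*(p-k)/(k + sqrt (k ^ 2 + 4 * p * c ^ 2 * (p - k))) < 0); [|lra].
      unfold Rdiv. apply Rmult_neg_pos; [lra|]. apply Rinv_0_lt_compat; lra.
    - destruct (Rle_dec 0 (p-k)); [|lra]. exfalso.
      assert (0 <= 2*(p-k)/(k + sqrt (k ^ 2 + 4 * p * c ^ 2 * (p - k)))); [|lra].
      apply Rmult_le_pos; [lra|]. left; apply Rinv_0_lt_compat; lra. }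
  destruct (clamp_cases E) as [[h1 h2]|[[h1 h2]|[h1 h2]]]; rewrite h2.
  - repeat split; intros; try lra.
    destruct (Rlt_dec E 0) as [hl|hl].
    + apply hEsign in hl. nra.
    + assert (Ez : E = 0) by lra. rewrite Ez in hg. nra.
  - repeat split; intros; try lra; rewrite hg; lra.
  - repeat split; intros; try lra.
    assert (0 <= (E - 1) * (p*c^2*(1 + E) + k)) by (apply Rmult_le_pos; [lra|];
      assert (0 <= p*c^2*(1+E)) by (assert (0 <= c^2) by nra; pos); lra).
    nra.
Qed.

Lemma mul_nonpos a b : a <= 0 -> 0 <= b -> a * b <= 0.
Proof. intros; nra. Qed.

Lemma up_lt1 p q q' e' c e y : 0 < q -> 0 < q' -> 0 < e' < 1 -> 0 <= c < 1 ->
  p = q' * (1 + e') -> 0 <= e <= 1 -> -1 <= y <= 1 ->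
  dfin p e' q c e y <=
  Rmax (p - q) (Rmax (Rmin (2*q/(1-c) - p/(1 - xh p q c e')) (2*q/(1+c) - q'))
                     (Rmin (p/(1-e') - aa q c (eh p q c e')) (2*q/(1-c) - q'))).
Proof.
  intros hq hq' he hc hp he0 hy.
  assert (hp0 : 0 < p) by (subst; nra).
  assert (hq'e : q' = p / (1 + e')) by (subst; field; lra).
  assert (hc' : 0 <= c <= 1) by lra.
  assert (hec : e * c < 1) by nra.
  destruct (aa_bounds q c e hq hc' he0) as [a1 a2].
  destruct (bb_bounds q c e hq hc' he0 hec) as [b1 b2].
  pose proof (bb_le_b1 q c e hq hc he0) as b3.
  destruct (AB_bounds p e' y hp0 he hy) as [[A1 A2] [[B1 B2] AB]].
  destruct (xh_bounds p q c e' hp0 hq hc' he) as [[x1 x2] [x3 x4]].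
  unfold dfin. rewrite <- hq'e in A1, B1.
  apply comb with (Ax := p/(1 + xh p q c e')); auto.
  - destruct (Rle_dec (xh p q c e') (e'*y)).
    + left. apply frac_le; nra.
    + right. apply frac_le; nra.
  - 
    assert (hx1 : 0 <= xh p q c e' < 1) by lra.
    pose proof (xi_ident q c p (xh p q c e') hc hx1) as E.
    assert (0 < (1 - (xh p q c e')^2) * (1 - c^2)) by (apply Rmult_lt_0_compat; nra).
    assert (2 * (2 * q * c * xh p q c e' ^ 2 + p * (1 - c ^ 2) * xh p q c e' - 2 * q * c) /
      ((1 - xh p q c e' ^ 2) * (1 - c ^ 2)) <= 0).
    { unfold Rdiv. apply mul_nonpos; [lra|]. left; apply Rinv_0_lt_compat; lra. }
    lra.
  - destruct (eh_facts p q c e' hp0 hq hc' he) as [[h1 h2] [h3 h4]].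
    destruct (Rle_dec (eh p q c e') e).
    + left. assert (aa q c (eh p q c e') <= aa q c e) by (apply aa_mono; lra). lra.
    + right.
      assert (hE0 : 0 < eh p q c e') by lra. pose proof (h3 hE0) as hg.
      set (E := eh p q c e') in *.
      assert (hEc : E * c < 1) by nra.
      assert (bb q c e <= bb q c E) by (apply bb_mono; lra).
      pose proof (sum_ab q c E p e' hc' (conj h1 h2) hEc he) as S.
      assert (0 <= E*c) by pos. assert (0 < 1 - E^2*c^2) by nra. assert (0 < 1 - e'^2) by nra.
      assert (0 < (1 - E^2 * c^2) * (1 - e'^2)) by (apply Rmult_lt_0_compat; lra).
      assert (2 * (p * c ^ 2 * E ^ 2 + q * (1 - e' ^ 2) * E + q * (1 - e' ^ 2) - p) /
        ((1 - E ^ 2 * c ^ 2) * (1 - e' ^ 2)) <= 0).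
      { unfold Rdiv. apply mul_nonpos; [lra|]. left; apply Rinv_0_lt_compat; lra. }
      rewrite hq'e. lra.
Qed.

Lemma aa0 q c : aa q c 0 = q.
Proof. unfold aa. field. Qed.
Lemma bb0 q c : bb q c 0 = q.
Proof. unfold bb. field. Qed.
Lemma aa1 q c : 0 <= c -> aa q c 1 = 2*q/(1+c).
Proof. intros; unfold aa. replace (1+1*c) with (1+c) by ring. field. lra. Qed.
Lemma bb1 q c : c < 1 -> bb q c 1 = 2*q/(1-c).
Proof. intros; unfold bb. replace (1-1*c) with (1-c) by ring. field. lra. Qed.
Lemma aac1 q e : 0 <= e -> aa q 1 e = q.
Proof. intros; unfold aa. field. lra. Qed.

Lemma w_int p q e' c : 0 <= c < 1 -> p - q <= dfin p e' q c 0 0.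
Proof.
  intros; unfold dfin. rewrite aa0, bb0. replace (p/(1+e'*0)) with p by field.
  replace (p/(1-e'*0)) with p by field. rewrite Rmin_left by lra.
  apply Rle_abs.
Qed.

Lemma w_ext p q q' e' c : 0 < q -> 0 < q' -> 0 < e' < 1 -> 0 <= c < 1 ->
  p = q' * (1 + e') ->
  Rmin (2*q/(1-c) - p/(1 - xh p q c e')) (2*q/(1+c) - q') <= dfin p e' q c 1 (xh p q c e' / e').
Proof.
  intros hq hq' he hc hp.
  assert (hp0 : 0 < p) by (subst; nra).
  assert (hq'e : q' = p / (1 + e')) by (subst; field; lra).
  assert (hc' : 0 <= c <= 1) by lra.
  destruct (xh_bounds p q c e' hp0 hq hc' he) as [[x1 x2] [x3 x4]].
  destruct (xs_facts p q c hp0 hq hc') as [s1 s2].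
  unfold dfin. rewrite aa1, bb1 by lra.
  replace (e' * (xh p q c e' / e')) with (xh p q c e') by (field; lra).
  set (X := xh p q c e') in *.
  assert (Hm : Rmin (Rabs (p / (1 + X) - 2 * q / (1 + c))) (Rabs (p / (1 - X) - 2 * q / (1 - c)))
     >= Rmin (2 * q / (1 + c) - p / (1 + X)) (2 * q / (1 - c) - p / (1 - X))).
  { unfold Rmin. destruct Rle_dec; destruct Rle_dec; unfold Rabs; repeat destruct Rcase_abs; lra. }
  assert (hx1 : 0 <= X < 1) by lra.
  pose proof (xi_ident q c p X hc hx1) as E.
  assert (Xc : X = xs p q c \/ X = e') by (unfold X, xh, Rmin; destruct Rle_dec; auto).
  destruct Xc as [Xc|Xc].
  - rewrite <- Xc in s2. rewrite s2 in E.
    replace (2 * 0 / ((1 - X ^ 2) * (1 - c ^ 2))) with 0 in E by (unfold Rdiv; ring).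
    assert (Rmin (2 * q / (1 - c) - p / (1 - X)) (2 * q / (1 + c) - q') <= 2 * q / (1 - c) - p / (1 - X)) by apply Rmin_l.
    unfold Rmin in Hm at 2. destruct Rle_dec in Hm; lra.
  - assert (p / (1 + X) = q') by (rewrite Xc, hq'e; auto).
    rewrite H in *. rewrite (Rmin_comm (2 * q / (1 - c) - p / (1 - X))). lra.
Qed.


Lemma w_link p q q' e' c : 0 < q -> 0 < q' -> 0 < e' < 1 -> 0 <= c < 1 ->
  p = q' * (1 + e') ->
  Rmin (p/(1-e') - aa q c (eh p q c e')) (2*q/(1-c) - q') <= dfin p e' q c (eh p q c e') (-1).
Proof.
  intros hq hq' he hc hp.
  assert (hp0 : 0 < p) by (subst; nra).
  assert (hq'e : q' = p / (1 + e')) by (subst; field; lra).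
  assert (hc' : 0 <= c <= 1) by lra.
  destruct (eh_facts p q c e' hp0 hq hc' he) as [[h1 h2] [h3 h4]].
  unfold dfin.
  replace (p / (1 + e' * -1)) with (p / (1 - e')) by (f_equal; ring).
  replace (p / (1 - e' * -1)) with q' by (rewrite hq'e; f_equal; ring).
  set (E := eh p q c e') in *.
  assert (Hm : Rmin (Rabs (p / (1 - e') - aa q c E)) (Rabs (q' - bb q c E))
     >= Rmin (p / (1 - e') - aa q c E) (bb q c E - q')).
  { unfold Rmin. destruct Rle_dec; destruct Rle_dec; unfold Rabs; repeat destruct Rcase_abs; lra. }
  destruct (Rle_dec 1 E).
  - assert (E = 1) by lra. rewrite H in *. rewrite bb1 in Hm |- * by lra. lra.
  - assert (hg := h4 ltac:(lra)).
    assert (hEc : E * c < 1) by nra.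
    pose proof (sum_ab q c E p e' hc' (conj h1 h2) hEc he) as S.
    assert (0 <= E*c) by pos. assert (0 < 1 - E^2*c^2) by nra. assert (0 < 1 - e'^2) by nra.
    assert (0 < (1 - E^2 * c^2) * (1 - e'^2)) by (apply Rmult_lt_0_compat; lra).
    assert (0 <= 2 * (p * c ^ 2 * E ^ 2 + q * (1 - e' ^ 2) * E + q * (1 - e' ^ 2) - p) /
        ((1 - E ^ 2 * c ^ 2) * (1 - e' ^ 2))).
    { apply Rmult_le_pos; [lra|]. left; apply Rinv_0_lt_compat; lra. }
    rewrite <- hq'e in S.
    assert (Rmin (p / (1 - e') - aa q c E) (2 * q / (1 - c) - q') <= p / (1 - e') - aa q c E) by apply Rmin_l.
    unfold Rmin in Hm at 2. destruct Rle_dec in Hm; lra.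
Qed.

Lemma frac_lt' x y z : 0 < y -> x < z * y -> x / y < z.
Proof. intros. apply Rmult_lt_reg_r with y; [lra|].
  replace (x / y * y) with x by (field; lra). lra. Qed.

Lemma low_gen p q q' e' c e y : 0 < q -> 0 < q' -> 0 < e' < 1 -> 0 <= c <= 1 ->
  p = q' * (1 + e') -> 0 <= e <= 1 -> -1 <= y <= 1 -> e * c < 1 ->
  q - p/(1-e') <= dfin p e' q c e y.
Proof.
  intros hq hq' he hc hp he0 hy hec.
  assert (hp0 : 0 < p) by (subst; nra).
  destruct (aa_bounds q c e hq hc he0) as [a1 a2].
  destruct (bb_bounds q c e hq hc he0 hec) as [b1 b2].
  destruct (AB_bounds p e' y hp0 he hy) as [[A1 A2] [[B1 B2] AB]].
  unfold dfin, Rmin. destruct Rle_dec; unfold Rabs; repeat destruct Rcase_abs; lra.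
Qed.

Lemma low_lt1 p q q' e' c e y : 0 < q -> 0 < q' -> 0 < e' < 1 -> 0 <= c < 1 ->
  p = q' * (1 + e') -> 0 <= e <= 1 -> -1 <= y <= 1 ->
  q' - 2*q/(1-c) <= dfin p e' q c e y.
Proof.
  intros hq hq' he hc hp he0 hy.
  assert (hp0 : 0 < p) by (subst; nra).
  assert (hq'e : q' = p / (1 + e')) by (subst; field; lra).
  assert (hc' : 0 <= c <= 1) by lra.
  assert (hec : e * c < 1) by nra.
  destruct (aa_bounds q c e hq hc' he0) as [a1 a2].
  destruct (bb_bounds q c e hq hc' he0 hec) as [b1 b2].
  pose proof (bb_le_b1 q c e hq hc he0) as b3.
  assert (2*q/(1+c) <= 2*q/(1-c)) by (apply frac_le; nra).
  destruct (AB_bounds p e' y hp0 he hy) as [[A1 A2] [[B1 B2] AB]].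
  rewrite <- hq'e in A1, B1.
  unfold dfin, Rmin. destruct Rle_dec; unfold Rabs; repeat destruct Rcase_abs; lra.
Qed.

Lemma wlo_ext p q e' c : 0 < e' < 1 -> dfin p e' q c 0 1 <= Rabs (p/(1-e') - q).
Proof.
  intros. unfold dfin. rewrite aa0, bb0. replace (e'*1) with e' by ring. apply Rmin_r.
Qed.

Lemma wlo_int p q q' e' c : 0 < e' < 1 -> 0 <= c < 1 -> p = q' * (1 + e') ->
  dfin p e' q c 1 (-1) <= Rabs (q' - 2*q/(1-c)).
Proof.
  intros he hc hp. unfold dfin. rewrite bb1 by lra.
  replace (p / (1 - e' * -1)) with q' by (subst; field; lra). apply Rmin_r.
Qed.

Lemma wzero p q q' e' c : 0 < q -> 0 < q' -> 0 < e' < 1 -> 0 <= c <= 1 ->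
  p = q' * (1 + e') -> Rmax q q' <= p/(1-e') -> Rmax q q' * (1 - c) <= 2 * q ->
  exists e y, 0 <= e <= 1 /\ -1 <= y <= 1 /\ e * c < 1 /\ dfin p e' q c e y <= 0.
Proof.
  intros hq hq' he hc hp ht1 ht2.
  assert (hp0 : 0 < p) by (subst; nra).
  assert (hq'e : q' = p / (1 + e')) by (subst; field; lra).
  set (t := Rmax q q') in *.
  assert (tq : q <= t) by apply Rmax_l.
  assert (tq' : q' <= t) by apply Rmax_r.
  assert (hqt : 0 < q + t*c) by (assert (0 <= t*c) by pos; lra).
  exists ((t - q)/(q + t*c)), ((1 - p/t)/e').
  assert (he0 : 0 <= (t - q)/(q + t*c) <= 1).
  { split. apply Rmult_le_pos; [lra|left; apply Rinv_0_lt_compat; lra].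
    apply frac_le'; lra. }
  assert (hec : (t - q)/(q + t*c) * c < 1).
  { replace ((t - q)/(q + t*c) * c) with ((t-q)*c/(q+t*c)) by (field; lra).
    apply frac_lt'; [lra|]. assert (0 <= q*c) by pos. nra. }
  assert (hpt1 : p / t <= 1 + e').
  { apply frac_le'; [lra|]. rewrite hq'e in tq'. 
    assert (p <= t * (1 + e')); [|lra].
    assert (p/(1+e') * (1+e') = p) by (field; lra). nra. }
  assert (hpt2 : 1 - e' <= p / t).
  { apply le_frac; [lra|].
    assert (t * (1-e') <= p/(1-e') * (1-e')) by nra.
    replace (p/(1-e') * (1-e')) with p in H by (field; lra). lra. }
  split; [auto|]. split.
  { split. apply le_frac; lra. apply frac_le'; lra. }
  split; [auto|].
  unfold dfin.
  assert (HB : p / (1 - e' * ((1 - p / t) / e')) = t) by (field; repeat split; lra).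
  assert (Hb : bb q c ((t - q) / (q + t * c)) = t).
  { unfold bb. field. split; [lra|]. assert (0 <= q*c) by pos. nra. }
  rewrite HB, Hb. replace (t - t) with 0 by ring. rewrite Rabs_R0. apply Rmin_r.
Qed.

Lemma divpos_fin a b : b <> 0 -> er_divpos a b = Fin (a / b).
Proof. intros h; unfold er_divpos; destruct (Req_EM_T b 0); [contradiction|reflexivity]. Qed.
Lemma divpos_inf a b : b = 0 -> er_divpos a b = PInf.
Proof. intros h; unfold er_divpos; destruct (Req_EM_T b 0); [reflexivity|contradiction]. Qed.

Lemma delta_fin q' e' q e w w' : 0 < e' < 1 -> 0 <= e <= 1 -> 0 <= cos w <= 1 -> e * cos w < 1 ->
  delta_nod q' e' q e w w' = Fin (dfin (q' * (1 + e')) e' q (cos w) e (cos w')).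
Proof.
  intros he he0 hc hec. pose proof (COS_bound w') as hy.
  unfold delta_nod, r_plus, r_minus.
  assert (0 <= e * cos w) by pos.
  rewrite !divpos_fin by (intro; nra).
  reflexivity.
Qed.

Lemma delta_inf q' e' q w w' : 0 < e' < 1 -> cos w = 1 ->
  delta_nod q' e' q 1 w w' = Fin (Rabs (q' * (1 + e') / (1 + e' * cos w') - aa q 1 1)).
Proof.
  intros he hc. pose proof (COS_bound w') as hy.
  unfold delta_nod, r_plus, r_minus.
  rewrite (divpos_inf (q * (1 + 1)) (1 - 1 * cos w)) by (rewrite hc; ring).
  rewrite !divpos_fin by (rewrite ?hc; intro; nra).
  simpl. unfold aa. rewrite hc. reflexivity.
Qed.

Lemma assemble (F : R -> R -> ER) L U :
 (forall e w', 0<=e<=1 -> 0<=w'<=PI -> exists d, F e w' = Fin d /\ L <= d /\ d <= U) ->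
 (exists e w', 0<=e<=1 /\ 0<=w'<=PI /\ exists d, F e w' = Fin d /\ d <= L) ->
 (exists e w', 0<=e<=1 /\ 0<=w'<=PI /\ exists d, F e w' = Fin d /\ U <= d) ->
 ((exists e w', 0<=e<=1 /\ 0<=w'<=PI /\ F e w' = Fin L) /\
  (forall e w', 0<=e<=1 -> 0<=w'<=PI -> er_le (Fin L) (F e w'))) /\
 ((exists e w', 0<=e<=1 /\ 0<=w'<=PI /\ F e w' = Fin U) /\
  (forall e w', 0<=e<=1 -> 0<=w'<=PI -> er_le (F e w') (Fin U))).
Proof.
  intros HB [e1 [w1 [h1 [h2 [d1 [E1 D1]]]]]] [e2 [w2 [g1 [g2 [d2 [E2 D2]]]]]].
  split; split.
  - exists e1, w1. split; [auto|split; [auto|]]. rewrite E1.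
    destruct (HB e1 w1 h1 h2) as [d [E [l u]]]. rewrite E1 in E. injection E as ->.
    f_equal. lra.
  - intros e w he hw. destruct (HB e w he hw) as [d [E [l u]]]. rewrite E. simpl. lra.
  - exists e2, w2. split; [auto|split; [auto|]]. rewrite E2.
    destruct (HB e2 w2 g1 g2) as [d [E [l u]]]. rewrite E2 in E. injection E as ->.
    f_equal. lra.
  - intros e w he hw. destruct (HB e w he hw) as [d [E [l u]]]. rewrite E. simpl. lra.
Qed.

Lemma acos_wit y : -1 <= y <= 1 -> 0 <= acos y <= PI /\ cos (acos y) = y.
Proof. intros; split; [apply acos_bound|apply cos_acos; auto]. Qed.

Lemma dfin_nonneg p e' q c e y : 0 <= dfin p e' q c e y.
Proof. unfold dfin, Rmin. destruct Rle_dec; apply Rabs_pos. Qed.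

Theorem proposition1 (q' e' qmax : R) (hq' : 0 < q') (he' : 0 < e' < 1)
  (hqmax : 0 < qmax) (q w : R) (hq : 0 < q <= qmax) (hw : 0 <= w <= PI / 2) :
  (* minimum over D1 = {0 <= e <= 1, 0 <= w' <= PI} *)
  ((exists e w', 0 <= e <= 1 /\ 0 <= w' <= PI /\
       delta_nod q' e' q e w w' =
       er_max (Fin 0) (er_max (l_int q' e' q w) (l_ext q' e' q w))) /\
   (forall e w', 0 <= e <= 1 -> 0 <= w' <= PI ->
       er_le (er_max (Fin 0) (er_max (l_int q' e' q w) (l_ext q' e' q w)))
             (delta_nod q' e' q e w w'))) /\
  (* maximum over D1 *)
  ((exists e w', 0 <= e <= 1 /\ 0 <= w' <= PI /\
       delta_nod q' e' q e w w' =
       er_max (u_int q' e' q w) (er_max (u_ext q' e' q w) (u_link q' e' q w))) /\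
   (forall e w', 0 <= e <= 1 -> 0 <= w' <= PI ->
       er_le (delta_nod q' e' q e w w')
             (er_max (u_int q' e' q w) (er_max (u_ext q' e' q w) (u_link q' e' q w))))).
Proof.
  assert (hPI : 0 < PI) by apply PI_RGT_0.
  assert (hc : 0 <= cos w <= 1).
  { split; [apply cos_ge_0; lra|apply COS_bound]. }
  assert (hs : sin w ^ 2 = 1 - cos w ^ 2).
  { pose proof (sin2_cos2 w) as h. unfold Rsqr in h. simpl. lra. }
  assert (hq0 : 0 < q) by lra.
  set (p := q' * (1 + e')).
  assert (hp : p = q' * (1 + e')) by reflexivity.
  assert (hp0 : 0 < p) by (unfold p; nra).
  assert (hq'e : q' = p / (1 + e')) by (unfold p; field; lra).
  assert (hQ : q' * (1 + e') / (1 - e') = p / (1 - e')) by reflexivity.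
  assert (hpQ : p <= p / (1 - e')) by (apply le_frac; nra).
  assert (hq'Q : q' <= p / (1 - e')) by (rewrite hq'e at 1; apply frac_le; nra).
  assert (Hxi : xi_star q' e' q w = xs p q (cos w)).
  { unfold xi_star, xs, p_. fold p. replace (sin w ^ 4) with ((sin w ^ 2) ^ 2) by ring.
    rewrite hs. reflexivity. }
  assert (Hes : e_star q' e' q w = es p (q * (1 - e'^2)) (cos w)).
  { unfold e_star, es, p_. fold p.
    replace (q ^ 2 * (1 - e' ^ 2) ^ 2) with ((q * (1 - e'^2))^2) by ring. reflexivity. }
  set (c := cos w) in *.
  destruct (Rlt_dec c 1) as [hc1|hc1].
  -
    assert (hcl : 0 <= c < 1) by lra.
    assert (HL : er_max (Fin 0) (er_max (l_int q' e' q w) (l_ext q' e' q w)) =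
                 Fin (Rmax 0 (Rmax (q' - 2*q/(1-c)) (q - p/(1-e'))))).
    { unfold l_int, l_ext, Q_. fold c. rewrite divpos_fin by lra. reflexivity. }
    assert (HU : er_max (u_int q' e' q w) (er_max (u_ext q' e' q w) (u_link q' e' q w)) =
       Fin (Rmax (p - q) (Rmax (Rmin (2*q/(1-c) - p/(1 - xh p q c e')) (2*q/(1+c) - q'))
                     (Rmin (p/(1-e') - aa q c (eh p q c e')) (2*q/(1-c) - q'))))).
    { unfold u_int, u_ext, u_link, xi_hat, e_hat, Q_, p_. fold p. fold c.
      rewrite Hxi, Hes. rewrite !divpos_fin by lra. reflexivity. }
    rewrite HL, HU.
    apply (assemble (fun e w' => delta_nod q' e' q e w w')).
    + intros e w' he hw'. pose proof (COS_bound w') as hy.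
      assert (hec : e * c < 1) by nra.
      exists (dfin p e' q c e (cos w')). split; [apply delta_fin; auto|].
      split.
      * apply Rmax_lub; [apply dfin_nonneg|]. apply Rmax_lub.
        -- apply (low_lt1 p q q' e' c e (cos w')); auto.
        -- apply (low_gen p q q' e' c e (cos w')); auto.
      * apply (up_lt1 p q q' e' c e (cos w')); auto.
    + destruct (Rlt_dec 0 (q - p/(1-e'))) as [h1|h1].
      { exists 0, 0. split; [lra|split; [lra|]].
        exists (dfin p e' q c 0 (cos 0)). split; [apply delta_fin; auto; fold c; lra|].
        rewrite cos_0. eapply Rle_trans; [apply wlo_ext; auto|].
        rewrite Rabs_left by lra. eapply Rle_trans; [|apply Rmax_r]. eapply Rle_trans; [|apply Rmax_r]. lra. }
      destruct (Rlt_dec 0 (q' - 2*q/(1-c))) as [h2|h2].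
      { exists 1, PI. split; [lra|split; [lra|]].
        exists (dfin p e' q c 1 (cos PI)). split; [apply delta_fin; auto; fold c; lra|].
        rewrite cos_PI. eapply Rle_trans; [apply (wlo_int p q q' e' c); auto|].
        rewrite Rabs_pos_eq by lra. eapply Rle_trans; [|apply Rmax_r]. apply Rmax_l. }
      assert (hq'b : q' * (1 - c) <= 2 * q).
      { assert (q' <= 2*q/(1-c)) by lra.
        assert (2*q/(1-c)*(1-c) = 2*q) by (field; lra). nra. }
      assert (ht1 : Rmax q q' <= p/(1-e')) by (apply Rmax_lub; lra).
      assert (ht2 : Rmax q q' * (1 - c) <= 2 * q).
      { unfold Rmax; destruct Rle_dec; nra. }
      destruct (wzero p q q' e' c hq0 hq' he' hc hp ht1 ht2) as [e [y [he0 [hy [hec hd]]]]].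
      destruct (acos_wit y hy) as [hw' hcy].
      exists e, (acos y). split; [auto|split; [auto|]].
      exists (dfin p e' q c e y). split.
      { rewrite <- hcy at 2. apply delta_fin; auto. }
      eapply Rle_trans; [exact hd|]. apply Rmax_l.
    + set (U1 := p - q).
      set (U2 := Rmin (2*q/(1-c) - p/(1 - xh p q c e')) (2*q/(1+c) - q')).
      set (U3 := Rmin (p/(1-e') - aa q c (eh p q c e')) (2*q/(1-c) - q')).
      destruct (Rle_dec (Rmax U2 U3) U1) as [m1|m1].
      { rewrite Rmax_left by auto.
        exists 0, (PI/2). split; [lra|split; [lra|]].
        exists (dfin p e' q c 0 (cos (PI/2))). split; [apply delta_fin; auto; fold c; lra|].
        rewrite cos_PI2. apply w_int; auto. }
      rewrite Rmax_right by lra.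
      destruct (Rle_dec U3 U2) as [m2|m2].
      { rewrite Rmax_left by auto.
        pose proof (eh_facts p q c e' hp0 hq0 hc he') as [[e1 e2] _].
        destruct (xh_bounds p q c e' hp0 hq0 hc he') as [[x1 x2] _].
        assert (hy : -1 <= xh p q c e' / e' <= 1).
        { split; [apply le_frac; lra| apply frac_le'; lra]. }
        destruct (acos_wit _ hy) as [hw' hcy].
        exists 1, (acos (xh p q c e' / e')). split; [lra|split; [auto|]].
        exists (dfin p e' q c 1 (xh p q c e' / e')). split.
        { rewrite <- hcy at 2. apply delta_fin; auto; fold c; lra. }
        apply (w_ext p q q' e' c); auto. }
      rewrite Rmax_right by lra.
      pose proof (eh_facts p q c e' hp0 hq0 hc he') as [[e1 e2] _].
      exists (eh p q c e'), PI. split; [lra|split; [lra|]].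
      exists (dfin p e' q c (eh p q c e') (-1)). split.
      { rewrite <- cos_PI. apply delta_fin; auto; fold c; nra. }
      apply (w_link p q q' e' c); auto.
  -
    assert (hc1' : c = 1) by lra.
    assert (HL : er_max (Fin 0) (er_max (l_int q' e' q w) (l_ext q' e' q w)) =
                 Fin (Rmax 0 (q - p/(1-e')))).
    { unfold l_int, l_ext, Q_. fold c. rewrite (divpos_inf (2*q) (1 - c)) by lra. reflexivity. }
    assert (HU : er_max (u_int q' e' q w) (er_max (u_ext q' e' q w) (u_link q' e' q w)) =
       Fin (Rmax (p - q) (Rmax (q - q') (p/(1-e') - q)))).
    { unfold u_int, u_ext, u_link, xi_hat, e_hat, Q_, p_. fold p. fold c.
      rewrite (divpos_inf (2*q) (1 - c)) by lra. rewrite (divpos_fin (2*q) (1 + c)) by lra.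
      simpl. set (E := Rmax 0 (Rmin (e_star q' e' q w) 1)).
      assert (E0 : 0 <= E) by apply Rmax_l. rewrite hc1'.
      replace (2*q/(1+1)) with q by field. replace (q * (1 + E) / (1 + E * 1)) with q by (field; lra).
      reflexivity. }
    rewrite HL, HU.
    assert (hA : forall y, -1 <= y <= 1 -> Rabs (p/(1+e'*y) - q) <= Rmax (p - q) (Rmax (q - q') (p/(1-e') - q))).
    { intros y hy. destruct (AB_bounds p e' y hp0 he' hy) as [[A1 A2] _]. rewrite <- hq'e in A1.
      eapply Rle_trans; [|apply Rmax_r]. unfold Rmax, Rabs; destruct Rle_dec; destruct Rcase_abs; lra. }
    apply (assemble (fun e w' => delta_nod q' e' q e w w')).
    + intros e w' he hw'. pose proof (COS_bound w') as hy.
      destruct (Rlt_dec e 1) as [he1|he1].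
      * assert (hec : e * c < 1) by nra.
        exists (dfin p e' q c e (cos w')). split; [apply delta_fin; auto|].
        split.
        -- apply Rmax_lub; [apply dfin_nonneg|].
           apply (low_gen p q q' e' c e (cos w')); auto.
        -- eapply Rle_trans; [apply Rmin_l|]. rewrite hc1', aac1 by lra. apply hA; auto.
      * assert (e = 1) by lra. subst e.
        exists (Rabs (q' * (1 + e') / (1 + e' * cos w') - aa q 1 1)). split; [apply delta_inf; auto|].
        rewrite aac1 by lra. split.
        -- destruct (AB_bounds p e' (cos w') hp0 he' hy) as [[A1 A2] _].
           apply Rmax_lub; [apply Rabs_pos|]. fold p.
           unfold Rabs; destruct Rcase_abs; lra.
        -- apply hA; auto.
    + destruct (Rlt_dec 0 (q - p/(1-e'))) as [h1|h1].
      { exists 0, 0. split; [lra|split; [lra|]].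
        exists (dfin p e' q c 0 (cos 0)). split; [apply delta_fin; auto; fold c; lra|].
        rewrite cos_0. eapply Rle_trans; [apply wlo_ext; auto|].
        rewrite Rabs_left by lra. eapply Rle_trans; [|apply Rmax_r]. lra. }
      assert (ht1 : Rmax q q' <= p/(1-e')) by (apply Rmax_lub; lra).
      assert (ht2 : Rmax q q' * (1 - c) <= 2 * q) by (rewrite hc1'; lra).
      destruct (wzero p q q' e' c hq0 hq' he' hc hp ht1 ht2) as [e [y [he0 [hy [hec hd]]]]].
      destruct (acos_wit y hy) as [hw' hcy].
      exists e, (acos y). split; [auto|split; [auto|]].
      exists (dfin p e' q c e y). split.
      { rewrite <- hcy at 2. apply delta_fin; auto. }
      eapply Rle_trans; [exact hd|]. apply Rmax_l.
    + destruct (Rle_dec (p/(1-e') - q) (q - q')) as [m|m].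
      * exists 1, 0. split; [lra|split; [lra|]].
        exists (Rabs (q' * (1 + e') / (1 + e' * cos 0) - aa q 1 1)). split; [apply delta_inf; auto|].
        rewrite aac1, cos_0 by lra. fold p. replace (p / (1 + e' * 1)) with q' by (rewrite hq'e; f_equal; ring).
        unfold Rmax; repeat destruct Rle_dec; unfold Rabs; destruct Rcase_abs; lra.
      * exists 1, PI. split; [lra|split; [lra|]].
        exists (Rabs (q' * (1 + e') / (1 + e' * cos PI) - aa q 1 1)). split; [apply delta_inf; auto|].
        rewrite aac1, cos_PI by lra. fold p. replace (p / (1 + e' * -1)) with (p/(1-e')) by (f_equal; ring).
        unfold Rmax; repeat destruct Rle_dec; unfold Rabs; destruct Rcase_abs; lra.
Qed.
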